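(* For every nonempty standard subset $J\subseteq\{1,\dots,t\}$ one has $\mathrm{Ext}^1_{\mathcal A_{t,1}}(\Delta(J),\Delta(J))=0$.
   Context: Let $k$ be an algebraically closed field and $t\ge 3$ an integer. $\mathcal A_{t,1}$ is the quotient of the path algebra over $k$ of the quiver with vertices $1,\dots,t$, arrows $\alpha_i:i\to i+1$ ($1\le i\le t-1$) and $\beta_j:j+2\to j$ ($1\le j\le t-2$), by the relations $\beta_1\alpha_2=0$ and $\beta_{i+1}\alpha_{i+2}=\alpha_i\beta_i$ for $1\le i\le t-3$ (compositions of linear maps, written right to left). Modules are finite-dimensional and identified with representations $(M_i;\alpha_i,\beta_j)$ of the quiver satisfying these relations. A subset $J\subseteq\{1,\dots,t\}$ is standard if $j\in J$ implies $j+1\notin J$. For a nonempty standard subset $J$, the standard module $\Delta(J)$ has $\Delta(J)_i=k^{l}$ where $l=\#\{j\in J: j\le i\}$, with standard basis $e_1,\dots,e_l$; each $\alpha_i$ is the natural inclusion $e_h\mapsto e_h$, and each $\beta_j$ sends $e_h\mapsto e_{h-1}$ for $h\ge 2$ and $e_1\mapsto 0$. *)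

(* Defs.v *)
From HB Require Import structures.
From mathcomp Require Import all_boot all_order all_algebra.
Set Implicit Arguments. Unset Strict Implicit. Unset Printing Implicit Defensive.
Import GRing.Theory.
Local Open Scope ring_scope.

(* Representations of the quiver of A_{t,1}: vertices are natural numbers
   (only 1..t are used, see [is_module]); alpha i : i -> i+1, beta j : j+2 -> j.
   Linear maps are matrices acting on ROW vectors: v |-> v *m A.
   Hence the composite "g o f" (right to left) is the matrix  F *m G. *)
Record rep (k : fieldType) := Rep {
  rdim : nat -> nat;
  ralpha : forall i : nat, 'M[k]_(rdim i, rdim i.+1);
  rbeta : forall j : nat, 'M[k]_(rdim j.+2, rdim j) }.

(* M is an A_{t,1}-module: supported on vertices 1..t, and satisfies
   beta_1 alpha_2 = 0 and beta_{i+1} alpha_{i+2} = alpha_i beta_i (1 <= i <= t-3). *)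
Definition is_module (k : fieldType) (t : nat) (M : rep k) : Prop :=
  [/\ (forall i, (i == 0)%N || (t < i)%N -> rdim M i = 0%N),
      ralpha M 2 *m rbeta M 1 = 0 &
      (forall i, (1 <= i)%N -> (i + 3 <= t)%N ->
         ralpha M i.+2 *m rbeta M i.+1 = rbeta M i *m ralpha M i)].

Definition is_hom (k : fieldType) (M N : rep k)
  (phi : forall i, 'M[k]_(rdim M i, rdim N i)) : Prop :=
  (forall i, ralpha M i *m phi i.+1 = phi i *m ralpha N i) /\
  (forall j, rbeta M j *m phi j = phi j.+2 *m rbeta N j).

(* Ext^1_{A_{t,1}}(M, N) = 0 : every short exact sequence 0 -> N -> E -> M -> 0
   of A_{t,1}-modules splits. *)
Definition Ext1_zero (k : fieldType) (t : nat) (M N : rep k) : Prop :=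
  forall (E : rep k) (f : forall i, 'M[k]_(rdim N i, rdim E i))
         (g : forall i, 'M[k]_(rdim E i, rdim M i)),
    is_module t E -> is_hom f -> is_hom g ->
    (forall i, [&& row_free (f i), row_full (g i) & (f i == kermx (g i))%MS]) ->
    exists s : forall i, 'M[k]_(rdim M i, rdim E i),
      is_hom s /\ forall i, s i *m g i = 1%:M.

Definition standard (t : nat) (J : seq nat) : Prop :=
  (forall j, j \in J -> (1 <= j <= t)%N) /\
  (forall j, j \in J -> j.+1 \notin J).

Definition delta_dim (t : nat) (J : seq nat) (i : nat) : nat :=
  if (1 <= i <= t)%N then count (fun j => j \in J) (iota 1 i) else 0%N.

(* alpha: natural inclusion e_h |-> e_h ; beta: e_h |-> e_{h-1}, e_1 |-> 0
   (0-indexed rows/columns). *)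
Definition Delta (k : fieldType) (t : nat) (J : seq nat) : rep k :=
  @Rep k (delta_dim t J)
    (fun i => \matrix_(a, b) ((nat_of_ord a == nat_of_ord b)%:R : k))
    (fun j => \matrix_(a, b) ((nat_of_ord a == (nat_of_ord b).+1)%:R : k)).

(* Main.v *)
Require Import Defs.
From HB Require Import structures.
From mathcomp Require Import all_boot all_order all_algebra all_field.
Set Implicit Arguments. Unset Strict Implicit. Unset Printing Implicit Defensive.
Import GRing.Theory.
Local Open Scope ring_scope.

Section Dim.
Variables (t : nat) (J : seq nat).
Hypothesis hJ : standard t J.
Local Notation l := (delta_dim t J).

Lemma lbig i : (t < i)%N -> l i = 0%N.
Proof.
move=> ti; rewrite /delta_dim; case: ifP => // /andP[_ it].
by have := leq_trans ti it; rewrite ltnn.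
Qed.

Lemma lE i : (i <= t)%N -> l i = count (fun j => j \in J) (iota 1 i).
Proof. by case: i => // i it; rewrite /delta_dim it. Qed.

Lemma lS i : (i.+1 <= t)%N -> l i.+1 = (l i + (i.+1 \in J))%N.
Proof.
move=> it; rewrite (lE it) (lE (ltnW it)).
by have := iotaD 1 i 1; rewrite addn1 => ->; rewrite count_cat /= add1n addn0.
Qed.

Lemma l2 i : (l i.+2 <= (l i).+1)%N.
Proof.
case: (leqP i.+2 t) => it; last by rewrite lbig.
rewrite !lS ?(ltnW it) // -addnA -[(l i).+1]addn1 leq_add2l.
case: hJ => _ st; case h1: (i.+1 \in J); last by case: (i.+2 \in J).
by rewrite (negbTE (st _ h1)).
Qed.

Lemma lmono i : (i.+1 <= t)%N -> (l i <= l i.+1)%N.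
Proof. by move=> it; rewrite lS // leq_addr. Qed.

Lemma lnew i : (l i.+1 < l i.+2)%N -> l i.+2 = (l i).+1.
Proof.
move=> h; case: (leqP i.+2 t) => it; last by move: h; rewrite (lbig it).
move: h; rewrite !lS ?(ltnW it) //.
case h2: (i.+2 \in J); last by rewrite addn0 ltnn.
case: hJ => _ st; case h1: (i.+1 \in J).
  by have := st _ h1; rewrite h2.
by rewrite !addn0 addn1.
Qed.

Lemma l2le1 : (l 2 <= 1)%N.
Proof. exact: (l2 0). Qed.
End Dim.
Section Split.
Variables (k : fieldType) (t : nat) (J : seq nat).
Hypothesis hJ : standard t J.
Local Notation D := (Delta k t J).
Local Notation l := (delta_dim t J).
Variables (E : rep k) (f : forall i, 'M[k]_(l i, rdim E i))
  (g : forall i, 'M[k]_(rdim E i, l i)).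
Hypotheses (hE : is_module t E) (hf : @is_hom k D E f) (hg : @is_hom k E D g).
Hypothesis hex : forall i,
  [&& row_free (f i), row_full (g i) & (f i == kermx (g i))%MS].

Definition ev n (a : nat) : 'rV[k]_n := \row_b ((nat_of_ord b == a)%:R).

Lemma ev_delta n a (h : (a < n)%N) : ev n a = delta_mx 0 (Ordinal h).
Proof. by apply/rowP => b; rewrite !mxE. Qed.

Lemma ev_mul n p (X : 'M[k]_(n, p)) a (h : (a < n)%N) :
  ev n a *m X = row (Ordinal h) X.
Proof. by rewrite ev_delta -rowE. Qed.

Lemma row_alpha i (a : 'I_(l i)) : row a (ralpha D i) = ev (l i.+1) a.
Proof. by apply/rowP => b; rewrite !mxE eq_sym. Qed.

Lemma row_beta j (a : 'I_(l j.+2)) :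
  row a (rbeta D j) = if (a : nat) is a'.+1 then ev (l j) a' else 0.
Proof.
apply/rowP => b; case: a => [[|a'] ha] /=; rewrite !mxE //.
by rewrite eqSS eq_sym.
Qed.

Definition tgt i (A : nat -> 'rV[k]_(rdim E i)) (a : nat) : 'rV[k]_(rdim E i) :=
  if a is a'.+1 then A a' else 0.

Definition step i (A : nat -> 'rV[k]_(rdim E i)) (B : nat -> 'rV[k]_(rdim E i.+1))
  (a : nat) : 'rV[k]_(rdim E i.+2) :=
  if (a < l i.+1)%N then B a *m ralpha E i.+1
  else row_mx (ev (l i.+2) a) (tgt A a) *m pinvmx (row_mx (g i.+2) (rbeta E i)).

Definition S1 (a : nat) : 'rV[k]_(rdim E 1) := ev (l 1) a *m pinvmx (g 1).

Fixpoint P (i : nat) : (nat -> 'rV[k]_(rdim E i)) * (nat -> 'rV[k]_(rdim E i.+1)) :=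
  match i with
  | 0 => (fun _ => 0, S1)
  | i'.+1 => ((P i').2, step (P i').1 (P i').2)
  end.

Definition S i := (P i).1.

Lemma S_SS i : S i.+2 = step (S i) (S i.+1).
Proof. by []. Qed.

Lemma gfull i : row_full (g i).
Proof. by case/and3P: (hex i). Qed.

Lemma fg0 i : f i *m g i = 0.
Proof. by case/and3P: (hex i) => _ _ /andP[/sub_kermxP]. Qed.

Lemma ker_f i (r : 'rV[k]_(rdim E i)) : r *m g i = 0 -> exists D0, r = D0 *m f i.
Proof.
move=> /sub_kermxP rk; apply/submxP.
by case/and3P: (hex i) => _ _ /andP[_ kf]; apply: submx_trans kf.
Qed.

Lemma key i a :
  (forall a', (a' < l i)%N -> S i a' *m g i = ev (l i) a') ->
  (l i.+1 <= a)%N -> (a < l i.+2)%N ->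
  (row_mx (ev (l i.+2) a) (tgt (S i) a) <= row_mx (g i.+2) (rbeta E i))%MS.
Proof.
move=> C ha1 ha2.
have hN : l i.+2 = (l i).+1 by apply: lnew => //; apply: leq_trans ha2.
have E1 : ev (l i.+2) a *m rbeta D i - tgt (S i) a *m g i = 0.
  rewrite ev_mul row_beta.
  case: a ha1 ha2 => [|a'] ha1 ha2 /=; first by rewrite mul0mx subrr.
  rewrite C ?subrr //; by rewrite -ltnS -hN.
set u := ev (l i.+2) a *m pinvmx (g i.+2).
have ug : u *m g i.+2 = ev (l i.+2) a by rewrite mulmxKpV // submx_full // gfull.
have rg : (u *m rbeta E i - tgt (S i) a) *m g i = 0.
  by rewrite mulmxBl -mulmxA hg.2 mulmxA ug.
have [D0 hD0] := ker_f rg.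
pose T : 'M[k]_(l i, l i.+2) := \matrix_(b, c) ((nat_of_ord c == (nat_of_ord b).+1)%:R).
have TB : T *m rbeta D i = 1%:M.
  apply/row_matrixP => b; rewrite row_mul row1.
  have hb : ((b : nat).+1 < l i.+2)%N by rewrite hN ltnS.
  have -> : row b T = ev (l i.+2) b.+1 by apply/rowP => c; rewrite !mxE.
  by rewrite ev_mul row_beta /= ev_delta; congr delta_mx; apply: val_inj.
apply/submxP; exists (u - (D0 *m T) *m f i.+2).
rewrite mul_mx_row mulmxBl mulmxBl.
rewrite -(mulmxA (D0 *m T) (f i.+2) (g i.+2)) fg0 mulmx0 subr0 ug.
rewrite -(mulmxA (D0 *m T) (f i.+2) (rbeta E i)) -hf.2 mulmxA.
rewrite -(mulmxA D0 T) TB mulmx1 -hD0.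
by rewrite opprB addrC subrK.
Qed.

Lemma dimE0 i : (i == 0)%N || (t < i)%N -> rdim E i = 0%N.
Proof. by case: hE => h _ _; apply: h. Qed.

Lemma rv0 i (h : rdim E i = 0%N) (u v : 'rV[k]_(rdim E i)) : u = v.
Proof. apply/rowP => c; have := ltn_ord c; by rewrite [X in (_ < X)%N]h. Qed.

Lemma SC i : (forall a, (a < l i)%N -> S i a *m g i = ev (l i) a) /\ (forall a, (a < l i.+1)%N -> S i.+1 a *m g i.+1 = ev (l i.+1) a).
Proof.
elim: i => [|i [IH0 IH]].
  split => a // _; by rewrite /S /= /S1 mulmxKpV // submx_full // gfull.
split => // a ha; rewrite S_SS /step; case: ifP => h.
  by rewrite -mulmxA hg.1 mulmxA IH // (ev_mul _ h) row_alpha.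
have h' : (l i.+1 <= a)%N by rewrite leqNgt h.
by have := mulmxKpV (key IH0 h' ha); rewrite mul_mx_row => /eq_row_mx[-> _].
Qed.

Lemma SA i a : (0 < i)%N -> (a < l i)%N -> S i.+1 a = S i a *m ralpha E i.
Proof. by case: i => // i _ ha; rewrite S_SS /step ha. Qed.

Lemma SB j a : (a < l j.+2)%N -> S j.+2 a *m rbeta E j = tgt (S j) a.
Proof.
elim: j a => [|j IH] a ha; first by apply: rv0; apply: dimE0.
rewrite S_SS /step; case: ifP => h; last first.
  have h' : (l j.+2 <= a)%N by rewrite leqNgt h.
  have := mulmxKpV (key (SC j.+1).1 h' ha).
  by rewrite mul_mx_row => /eq_row_mx[_ ->].
case: j IH ha h => [|m] IH ha h.
  case: hE => _ r1 _; rewrite -mulmxA r1 mulmx0.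
  case: a ha h => [|a] // ha h.
  by have := leq_trans h (l2le1 hJ).
have mt : (m.+4 <= t)%N.
  by case: (leqP m.+4 t) => // mt; move: ha; rewrite (lbig J mt).
case: hE => _ _ r2; rewrite -mulmxA r2 // ?addn3 // mulmxA IH //.
case: a ha h => [|a] ha h /=; first by rewrite mul0mx.
rewrite (SA (i := m.+1)) //.
have := leq_trans h (l2 hJ m.+1); by rewrite ltnS.
Qed.

Definition sm i : 'M[k]_(l i, rdim E i) := \matrix_(a < l i) S i a.

Lemma sm_hom : @is_hom k D E sm.
Proof.
split=> i; apply/row_matrixP => a; rewrite !row_mul.
  rewrite row_alpha rowK.
  have i0 : (0 < i)%N by case: i a => // - [].
  case: (ltnP a (l i.+1)) => h; first by rewrite (ev_mul _ h) rowK (SA i0 (ltn_ord a)).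
  apply: rv0; apply: dimE0; apply/orP; right.
  case: (leqP i.+1 t) => // it.
  by have := leq_trans (ltn_ord a) (@lmono t J _ it); rewrite ltnNge h.
rewrite row_beta rowK SB //.
case: a => [[|a'] ha] /=; first by rewrite mul0mx.
have h : (a' < l i)%N by have := leq_trans ha (l2 hJ i); rewrite ltnS.
by rewrite (ev_mul _ h) rowK.
Qed.

Lemma sm_sec i : sm i *m g i = 1%:M.
Proof.
apply/row_matrixP => a; rewrite row_mul rowK row1 (SC i).1 // ev_delta.
by congr delta_mx; apply: val_inj.
Qed.
End Split.

Theorem theorem2p3 (k : closedFieldType) (t : nat) (J : seq nat) :
  (3 <= t)%N -> J != [::] -> standard t J ->
  Ext1_zero t (Delta k t J) (Delta k t J).
Proof.
move=> _ _ hJ E f g hE hf hg hex.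
exists (sm g); split; first exact: (sm_hom hJ hE hf hg hex).
exact: (sm_sec hJ hf hg hex).
Qed.
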